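(* Let $n\ge 4$ and let $D_n$ be the tree on vertex set $\{1,\ldots,n\}$ with edges $\{1,3\}$, $\{2,3\}$ and $\{i,i+1\}$ for $3\le i\le n-1$, with adjacency matrix $A$. Let $e$ be the all-ones vector of length $n$ and $W(D_n)=[e,Ae,\ldots,A^{n-1}e]$. Then $\operatorname{rank} W(D_n)=n-1$ if $4\nmid n$, and $\operatorname{rank} W(D_n)=n-2$ if $4\mid n$.
   Context: $W(D_n)$ is the walk matrix of $D_n$. *)

(* Defs.v *)
From mathcomp Require Import all_boot all_algebra.
Set Implicit Arguments. Unset Strict Implicit. Unset Printing Implicit Defensive.
Import GRing.Theory.
Local Open Scope ring_scope.

(* Vertices 1..n of the paper are represented by 'I_n, vertex k+1 <-> index k.
   Edges of D_n: {1,3}, {2,3}, {i,i+1} for 3 <= i <= n-1, i.e. (0-based)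
   {0,2}, {1,2}, {j,j+1} for 2 <= j <= n-2. *)
Definition Dn_edge (a b : nat) : bool :=
  [|| [&& a == 0%N & b == 2%N],
      [&& a == 1%N & b == 2%N] |
      [&& (2 <= a)%N & b == a.+1]].

Definition Dn_adj (n : nat) (i j : 'I_n) : bool := Dn_edge i j || Dn_edge j i.

Definition adjD (n : nat) : 'M[rat]_n := \matrix_(i, j) (Dn_adj i j)%:R.

Definition walk_matrix (n : nat) (A : 'M[rat]_n) : 'M[rat]_n :=
  \matrix_(i, k) ((A ^+ k *m (const_mx 1 : 'cV[rat]_n)) i ord0).

(* Main.v *)
Require Import Defs.
From mathcomp Require Import all_boot all_algebra.
From mathcomp Require Import zify ring lra.
Set Implicit Arguments. Unset Strict Implicit. Unset Printing Implicit Defensive.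
Import GRing.Theory Num.Theory.
Local Open Scope ring_scope.

Definition cv n (f : nat -> int) : 'cV[rat]_n := \col_(i < n) (f i)%:~R.

Definition Afz n (f : nat -> int) (i : nat) : int :=
  if (i < 2)%N then f 2%N else if i == 2%N then f 0%N + f 1%N + f 3%N
  else if i == n.-1 then f (n - 2)%N else f i.-1 + f i.+1.

Lemma sum_ind n (g : nat -> rat) (a : nat) : (a < n)%N ->
  \sum_(k < n) ((k : nat) == a)%:R * g k = g a.
Proof.
move=> ha; rewrite (bigD1 (Ordinal ha)) //= eqxx mul1r big1 ?addr0 // => k hk.
have -> : ((k : nat) == a) = false.
  by apply/negbTE; apply: contra hk => /eqP hk'; apply/eqP/val_inj.
by rewrite mul0r.
Qed.

Lemma adj_cv n f : (4 <= n)%N -> adjD n *m cv n f = cv n (Afz n f).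
Proof.
move=> hn; apply/matrixP => i j; rewrite !mxE.
under eq_bigr => k _ do rewrite !mxE.
rewrite /Afz.
case: ifP => h1.
  have E : forall k : 'I_n, (Dn_adj i k : nat) = ((k : nat) == 2%N) :> nat.
    by move=> k; rewrite /Dn_adj /Dn_edge; lia.
  under eq_bigr => k _ do rewrite E.
  by rewrite (sum_ind (fun k => (f k)%:~R)) //; lia.
case: ifP => h2.
  have E : forall k : 'I_n, (Dn_adj i k : nat) = (((k : nat) == 0%N) + ((k : nat) == 1%N) + ((k:nat) == 3%N))%N.
    by move=> k; rewrite /Dn_adj /Dn_edge; lia.
  under eq_bigr => k _ do rewrite E !natrD !mulrDl.
  rewrite !big_split /= !(sum_ind (fun k => (f k)%:~R)); try lia.
  by rewrite !intrD.
case: ifP => h3.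
  have E : forall k : 'I_n, (Dn_adj i k : nat) = ((k : nat) == (n - 2)%N) :> nat.
    by move=> k; rewrite /Dn_adj /Dn_edge; have := ltn_ord k; have := ltn_ord i; lia.
  under eq_bigr => k _ do rewrite E.
  by rewrite (sum_ind (fun k => (f k)%:~R)) //; lia.
have E : forall k : 'I_n, (Dn_adj i k : nat) = (((k : nat) == i.-1) + ((k : nat) == i.+1))%N.
  by move=> k; rewrite /Dn_adj /Dn_edge; have := ltn_ord k; have := ltn_ord i; lia.
under eq_bigr => k _ do rewrite E !natrD !mulrDl.
rewrite !big_split /= !(sum_ind (fun k => (f k)%:~R)); try (have := ltn_ord i; lia).
by rewrite !intrD.
Qed.


Definition ev n : 'cV[rat]_n := const_mx 1.

Definition Good n m (v : 'cV[rat]_n) :=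
  forall u : 'rV[rat]_n, (forall k, (k < m)%N -> u *m (adjD n ^+ k *m ev n) = 0) ->
  u *m v = 0.
Arguments Good : clear implicits.

Lemma Good_mono n m m' v : (m <= m')%N -> Good n m v -> Good n m' v.
Proof. by move=> hm G u hu; apply: G => k hk; apply: hu; lia. Qed.

Lemma Good_A n m v : Good n m v -> Good n m.+1 (adjD n *m v).
Proof.
move=> G u hu; rewrite mulmxA; apply: G => k hk.
rewrite -mulmxA (mulmxA (adjD n)).
by rewrite mulmxE -exprS hu.

Qed.

Lemma Good_sub n m v w : Good n m v -> Good n m w -> Good n m (v - w).
Proof. by move=> G1 G2 u hu; rewrite mulmxBr G1 // G2 // subr0. Qed.

Lemma Good_opp n m v : Good n m v -> Good n m (- v).
Proof. by move=> G1 u hu; rewrite mulmxN G1 // oppr0. Qed.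

Definition Gv n : 'cV[rat]_n := adjD n *m ev n - (ev n + ev n).

Lemma Good_G n : Good n 2 (Gv n).
Proof.
move=> u hu; rewrite /Gv mulmxBr mulmxDr.
have h0 := hu 0%N isT; have h1 := hu 1%N isT.
by rewrite expr0 mul1mx in h0; rewrite expr1 in h1; rewrite h0 h1 addr0 subr0.
Qed.

Fixpoint Fs n (w : nat) : 'cV[rat]_n :=
  match w with
  | 0 => Gv n
  | 1 => - Gv n
  | (w'.+1 as w1).+1 => adjD n *m Fs n w1 - Fs n w'
  end.

Lemma Good_Fs n w : Good n w.+2 (Fs n w.+1) /\ Good n w.+2 (Fs n w).
Proof.
elim: w => [|w [IH1 IH2]].
  by split; [apply: Good_opp|]; apply: Good_G.
split; last by apply: Good_mono IH1.
apply: Good_sub; first exact: Good_A.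
exact: Good_mono IH2.
Qed.

Lemma ker_pow n (u : 'rV[rat]_n) : u *m walk_matrix (adjD n) = 0 ->
  forall k, (k < n)%N -> u *m (adjD n ^+ k *m ev n) = 0.
Proof.
move=> hu k hk; apply/matrixP => i j; rewrite !ord1 [RHS]mxE.
transitivity ((u *m walk_matrix (adjD n)) 0 (Ordinal hk)); last by rewrite hu mxE.
by rewrite !mxE; apply: eq_bigr => l _; rewrite !mxE.
Qed.

Lemma ker_Fs n (u : 'rV[rat]_n) w : (4 <= n)%N -> (w < n)%N -> u *m walk_matrix (adjD n) = 0 ->
  u *m Fs n w = 0.
Proof.
move=> hn hw hu; have hp := ker_pow hu.
case: w hw => [|w] hw.
  by apply: Good_G => k hk; apply: hp; lia.
have [G _] := Good_Fs n w; apply: G => k hk; apply: hp; lia.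
Qed.


Definition bz (b : bool) : int := (b : nat)%:Z.

Definition gz n (i : nat) : int := bz (i == 2%N) - bz (i < 2)%N - bz (i == n.-1).

Definition Hz n w (i : nat) : int :=
  bz (i == w) - bz (i == w.+1) + bz (i == n.+1 - w)%N + bz (i == n - w)%N
  + bz ((w == n.-1) && (i == 0%N)).

Ltac splits := repeat match goal with
  | |- context [(?a == ?b)] => case: (ltngtP a b) => ?; try (exfalso; lia)
  | |- context [(?a < ?b)%N] => case: (ltnP a b) => ?; try (exfalso; lia)
  end.
Ltac afz := rewrite /Afz /gz /Hz; splits; rewrite /bz /=; lia.

Lemma pt_G n i : (4 <= n)%N -> (i < n)%N -> Afz n (fun _ => 1) i - (1 + 1) = gz n i.
Proof. move=> hn hi; afz. Qed.

Lemma pt_b2 n i : (4 <= n)%N -> (i < n)%N -> Afz n (fun j => - gz n j) i + - gz n i = Hz n 2 i.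
Proof. move=> hn hi; afz. Qed.

Lemma pt_b3 n i : (4 <= n)%N -> (i < n)%N -> Afz n (Hz n 2) i + gz n i = Hz n 3 i.
Proof. move=> hn hi; afz. Qed.

Lemma pt_step n w i : (4 <= n)%N -> (i < n)%N -> (2 <= w)%N -> (w.+2 <= n.-1)%N ->
  Afz n (Hz n w.+1) i - Hz n w i = Hz n w.+2 i.
Proof.
move=> hn hi h1 h2.
have [hb|hb] : ((i < 3) || (i == n.-1))%N \/ (3 <= i <= n - 2)%N by lia.
  have : (i = 0 \/ i = 1 \/ i = 2 \/ i = n.-1)%N by lia.
  by case=> [->|[->|[->|->]]]; afz.
rewrite /Afz.
rewrite (_ : (i < 2)%N = false); last by lia.
rewrite (_ : (i == 2%N) = false); last by lia.
rewrite (_ : (i == n.-1) = false); last by lia.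
have s1 : bz (i.-1 == w.+1) + bz (i.+1 == w.+1) = bz (i == w.+2) + bz (i == w) by rewrite /bz; lia.
have s2 : bz (i.-1 == w.+2) + bz (i.+1 == w.+2) = bz (i == w.+3) + bz (i == w.+1) by rewrite /bz; lia.
have s3 : bz (i.-1 == n.+1 - w.+1)%N + bz (i.+1 == n.+1 - w.+1)%N = bz (i == n.+1 - w)%N + bz (i == n.+1 - w.+2)%N by rewrite /bz; lia.
have s4 : bz (i.-1 == n - w.+1)%N + bz (i.+1 == n - w.+1)%N = bz (i == n - w)%N + bz (i == n - w.+2)%N by rewrite /bz; lia.
rewrite /Hz.
rewrite (_ : (i.-1 == 0%N) = false); last by lia.
rewrite (_ : (i.+1 == 0%N) = false); last by lia.
rewrite (_ : (i == 0%N) = false); last by lia.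
rewrite !andbF.
lia.
Qed.


Lemma cv_ext n f g : (forall i, (i < n)%N -> f i = g i) -> cv n f = cv n g.
Proof. by move=> h; apply/matrixP => i j; rewrite !mxE h. Qed.

Lemma cvB n f g : cv n f - cv n g = cv n (fun i => f i - g i).
Proof. by apply/matrixP => i j; rewrite !mxE intrB. Qed.

Lemma cvD n f g : cv n f + cv n g = cv n (fun i => f i + g i).
Proof. by apply/matrixP => i j; rewrite !mxE intrD. Qed.

Lemma cvN n f : - cv n f = cv n (fun i => - f i).
Proof. by apply/matrixP => i j; rewrite !mxE intrN. Qed.

Lemma ev_cv n : ev n = cv n (fun _ => 1).
Proof. by apply/matrixP => i j; rewrite !mxE. Qed.

Lemma Gv_cv n : (4 <= n)%N -> Gv n = cv n (gz n).
Proof.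
move=> hn; rewrite /Gv ev_cv adj_cv // cvD cvB; apply: cv_ext => i hi.
exact: pt_G.
Qed.

Lemma Fs_pair n k : (4 <= n)%N -> (k.+3 <= n.-1)%N ->
  Fs n k.+2 = cv n (Hz n k.+2) /\ Fs n k.+3 = cv n (Hz n k.+3).
Proof.
move=> hn; elim: k => [|k IH] hk.
  have E2 : Fs n 2 = cv n (Hz n 2).
    rewrite [Fs n 2]/= Gv_cv // cvN adj_cv // cvD; apply: cv_ext => i hi.
    exact: pt_b2.
  split=> //.
  rewrite [Fs n 3]/= -/(Fs n 2) E2 adj_cv // Gv_cv // opprK cvD; apply: cv_ext => i hi.
  exact: pt_b3.
have [_ E] := IH (ltnW hk); split=> //.
rewrite [Fs n k.+4]/= -/(Fs n k.+3) -/(Fs n k.+2).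
have [E' _] := IH (ltnW hk).
rewrite E E' adj_cv // cvB; apply: cv_ext => i hi.
apply: pt_step => //; lia.
Qed.

Lemma Fs_cv n w : (4 <= n)%N -> (2 <= w)%N -> (w <= n.-1)%N -> Fs n w = cv n (Hz n w).
Proof.
move=> hn h1 h2.
case: (ltnP w n.-1) => h3.
  have [k hk] : exists k, w = k.+2 by exists (w - 2)%N; lia.
  subst w.
  by have [] := @Fs_pair n k hn ltac:(lia).
have [k hk] : exists k, w = k.+3 by exists (w - 3)%N; lia.
subst w.
by have [] := @Fs_pair n k hn ltac:(lia).
Qed.


Definition dot n (u : 'rV[rat]_n) (f : nat -> int) := \sum_(i < n) u 0 i * (f i)%:~R.
Definition U n (u : 'rV[rat]_n) (a : nat) := dot u (fun i => bz (i == a)).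

Lemma dot_cv n (u : 'rV[rat]_n) f : u *m cv n f = 0 -> dot u f = 0.
Proof.
move=> h; have := congr1 (fun M : 'M[rat]_(1,1) => M 0 0) h; rewrite !mxE => <-.
by apply: eq_bigr => i _; rewrite !mxE.
Qed.

Lemma U_lt n (u : 'rV[rat]_n) a (ha : (a < n)%N) : U u a = u 0 (Ordinal ha).
Proof.
rewrite /U /dot (bigD1 (Ordinal ha)) //= eqxx mulr1 big1 ?addr0 // => k hk.
have -> : ((k : nat) == a) = false.
  by apply/negbTE; apply: contra hk => /eqP hk'; apply/eqP/val_inj.
by rewrite mulr0.
Qed.

Lemma U_ge n (u : 'rV[rat]_n) a : (n <= a)%N -> U u a = 0.
Proof.
move=> ha; rewrite /U /dot big1 // => k _.
have -> : ((k : nat) == a) = false by have := ltn_ord k; lia.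
by rewrite mulr0.
Qed.

Lemma dot_gz n (u : 'rV[rat]_n) : (4 <= n)%N ->
  dot u (gz n) = U u 2 - U u 0 - U u 1 - U u n.-1.
Proof.
move=> hn; rewrite /U /dot -!sumrB; apply: eq_bigr => i _.
rewrite /gz.
have -> : (bz (i < 2)%N) = bz ((i:nat) == 0%N) + bz ((i:nat) == 1%N) by rewrite /bz; lia.
rewrite !(intrD, intrB); ring.
Qed.

Lemma dot_Hz n (u : 'rV[rat]_n) w : (w != n.-1) ->
  dot u (Hz n w) = U u w - U u w.+1 + U u (n.+1 - w)%N + U u (n - w)%N.
Proof.
move=> hw; rewrite /U /dot -!sumrB -!big_split /=; apply: eq_bigr => i _.
rewrite /Hz (negbTE hw) /= !(intrD, intrB) /bz /=; ring.
Qed.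

Lemma dot_Hlast n (u : 'rV[rat]_n) : (4 <= n)%N ->
  dot u (Hz n n.-1) = U u 0 + U u 1 + U u 2 + U u n.-1.
Proof.
move=> hn; rewrite /U /dot -!big_split /=; apply: eq_bigr => i _.
have -> : Hz n n.-1 i = bz ((i:nat) == n.-1) + bz ((i:nat) == 2%N) + bz ((i:nat) == 1%N) + bz ((i:nat) == 0%N).
  by rewrite /Hz /bz; have := ltn_ord i; lia.
rewrite !(intrD, intrB).
ring.
Qed.


Definition sgn4 (v : nat) : rat :=
  if (v %% 4 == 3)%N then 1 else if (v %% 4 == 1)%N then -1 else 0.

Lemma sgn4_step k : sgn4 k.+4 = - sgn4 k.+2.
Proof.
rewrite /sgn4.
have e : (k.+4 %% 4 = (k.+2 %% 4 + 2) %% 4)%N by lia.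
rewrite e.
have : (k.+2 %% 4 = 0 \/ k.+2 %% 4 = 1 \/ k.+2 %% 4 = 2 \/ k.+2 %% 4 = 3)%N by lia.
by case=> [->|[->|[->|->]]] /=; rewrite ?oppr0 ?opprK.
Qed.

Lemma alg n (U : nat -> rat) : (4 <= n)%N ->
  U 2%N - U 0%N - U 1%N - U n.-1 = 0 ->
  U 0%N + U 1%N + U 2%N + U n.-1 = 0 ->
  (forall w, (2 <= w)%N -> (w <= n - 2)%N -> U w - U w.+1 + U (n.+1 - w)%N + U (n - w)%N = 0) ->
  [/\ U 2%N = 0, U 0%N + U 1%N = - U n.-1,
      (forall v, (2 <= v)%N -> (v < n)%N -> U v = U 3%N * sgn4 v) &
      (~~ (4 %| n)%N -> U 3%N = 0)].
Proof.
move=> hn hG hH hF.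
have h2 : U 2%N = 0 by lra.
have hc : U 0%N + U 1%N = - U n.-1 by lra.
have hab : forall w, (2 <= w)%N -> (w <= n - 2)%N ->
    U w = - U (n - w)%N /\ U w.+1 = U (n.+1 - w)%N.
  move=> w h1 h1'; have := hF w h1 h1'; have := hF (n - w)%N ltac:(lia) ltac:(lia).
  rewrite (_ : (n.+1 - (n - w) = w.+1)%N); last by lia.
  rewrite (_ : (n - (n - w) = w)%N); last by lia.
  rewrite (_ : ((n - w).+1 = n.+1 - w)%N); last by lia.
  move=> e1 e2; split; lra.
have hr : forall x, (4 <= x)%N -> (x <= n.-1)%N -> U x = - U (x - 2)%N.
  move=> x h1 h1'.
  have [_ hb] := hab x.-1 ltac:(lia) ltac:(lia).
  have [ha _] := hab (x - 2)%N ltac:(lia) ltac:(lia).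
  rewrite (_ : (x.-1).+1 = x) in hb; last by lia.
  rewrite (_ : (n.+1 - x.-1 = n - (x - 2))%N) in hb; last by lia.
  by rewrite hb ha opprK.
have hp : forall k, (k.+2 < n)%N -> U k.+2 = U 3%N * sgn4 k.+2 /\
                   ((k.+3 < n)%N -> U k.+3 = U 3%N * sgn4 k.+3).
  elim=> [|k IH] hk.
    by rewrite h2 /sgn4 /= mulr0 mulr1.
  have [_ IH2] := IH ltac:(lia); split; first exact: IH2.
  move=> hk'; have [IH1 _] := IH ltac:(lia).
  rewrite hr; [|lia|lia].
  rewrite (_ : (k.+4 - 2 = k.+2)%N); last by lia.
  by rewrite IH1 sgn4_step mulrN.
have hpat : forall v, (2 <= v)%N -> (v < n)%N -> U v = U 3%N * sgn4 v.
  move=> v h1 h1'; have [k hk] : exists k, v = k.+2 by exists (v - 2)%N; lia.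
  subst v; by have [] := hp k h1'.
split=> // hnd.
have [ha _] := hab 3%N ltac:(lia) ltac:(lia).
rewrite (hpat (n - 3)%N) in ha; [|lia|lia].
move: ha; rewrite /sgn4.
case: ifP => e3; first by move=> ha; lra.
rewrite (_ : ((n - 3) %% 4 == 1)%N = false); last by lia.
by rewrite mulr0 oppr0.
Qed.


Notation W n := (walk_matrix (adjD n)).

Lemma ker_alg n (u : 'rV[rat]_n) : (4 <= n)%N -> u *m W n = 0 ->
  [/\ U u 2%N = 0, U u 0%N + U u 1%N = - U u n.-1,
      (forall v, (2 <= v)%N -> (v < n)%N -> U u v = U u 3%N * sgn4 v) &
      (~~ (4 %| n)%N -> U u 3%N = 0)].
Proof.
move=> hn hu; apply: alg => //.
- have := @ker_Fs n u 0 hn ltac:(lia) hu; rewrite [Fs n 0]/= Gv_cv // => /dot_cv.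
  by rewrite dot_gz.
- have := @ker_Fs n u n.-1 hn ltac:(lia) hu; rewrite Fs_cv //; try lia.
  by move/dot_cv; rewrite dot_Hlast.
- move=> w h1 h2; have := @ker_Fs n u w hn ltac:(lia) hu; rewrite Fs_cv //; try lia.
  by move/dot_cv; rewrite dot_Hz //; lia.
Qed.

Lemma U_ord n (u : 'rV[rat]_n) (i : 'I_n) : U u i = u 0 i.
Proof. by rewrite (U_lt u (ltn_ord i)); congr (u 0 _); apply: val_inj. Qed.

Lemma ker_zero n (u : 'rV[rat]_n) : (4 <= n)%N -> u *m W n = 0 ->
  U u 0%N = U u 1%N -> U u 3%N = 0 -> u = 0.
Proof.
move=> hn hu h01 h3; have [h2 hc hp _] := ker_alg hn hu.
have hv : forall v, (2 <= v)%N -> (v < n)%N -> U u v = 0.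
  by move=> v h1 h1'; rewrite hp // h3 mul0r.
have hl : U u n.-1 = 0 by apply: hv; lia.
have h0 : U u 0%N = 0 by lra.
have h1 : U u 1%N = 0 by lra.
apply/rowP => i; rewrite mxE -U_ord.
have : ((i : nat) = 0 \/ (i : nat) = 1 \/ 2 <= i)%N by lia.
case=> [->|[->|hi]] //; apply: hv => //.
Qed.

Lemma U_lin n (u v : 'rV[rat]_n) (a : rat) k : U (u - a *: v) k = U u k - a * U v k.
Proof.
rewrite /U /dot mulr_sumr -sumrB; apply: eq_bigr => i _; rewrite !mxE; ring.
Qed.

Definition rv n (f : nat -> int) : 'rV[rat]_n := \row_(i < n) (f i)%:~R.

Lemma U_rv n f a : (a < n)%N -> U (rv n f) a = (f a)%:~R.
Proof. by move=> ha; rewrite (U_lt _ ha) mxE. Qed.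

Lemma adj_tr n : (adjD n)^T = adjD n.
Proof. by apply/matrixP => i j; rewrite !mxE /Dn_adj orbC. Qed.

Lemma rv_tr n f : (rv n f)^T = cv n f.
Proof. by apply/matrixP => i j; rewrite !mxE. Qed.

Lemma in_ker n f : (4 <= n)%N -> (forall i, (i < n)%N -> Afz n f i = 0) ->
  dot (rv n f) (gz n) = 0 -> rv n f *m W n = 0.
Proof.
move=> hn hA hG.
have hyA : rv n f *m adjD n = 0.
  apply: trmx_inj; rewrite trmx_mul adj_tr rv_tr adj_cv // trmx0.
  apply/matrixP => i j; rewrite !mxE hA //.
have hyG : rv n f *m Gv n = 0.
  rewrite Gv_cv //; apply/matrixP => i j; rewrite !ord1 !mxE.
  transitivity (dot (rv n f) (gz n)); last exact: hG.
  by apply: eq_bigr => k _; rewrite !mxE.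
have hye : rv n f *m ev n = 0.
  move: hyG; rewrite /Gv mulmxBr mulmxA hyA mul0mx sub0r mulmxDr => /eqP.
  rewrite oppr_eq0 => /eqP h.
  apply/matrixP => i j; have := congr1 (fun M : 'M[rat]_(1,1) => M i j) h.
  rewrite !mxE => h'; lra.
apply/matrixP => i k; rewrite !ord1 [RHS]mxE.
transitivity ((rv n f *m (adjD n ^+ k *m ev n)) 0 0).
  by rewrite !mxE; apply: eq_bigr => l _; rewrite !mxE.
case: k => [[|k'] hk] /=.
  by rewrite expr0 mul1mx hye mxE.
rewrite exprS -mulmxE -mulmxA mulmxA hyA mul0mx mxE //.
Qed.


Definition y1z (i : nat) : int := bz (i == 0%N) - bz (i == 1%N).
Definition y2z (i : nat) : int :=
  bz (i < 2)%N + 2 * bz ((i %% 4 == 1)%N && (2 <= i)%N) - 2 * bz (i %% 4 == 3)%N.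

Lemma y1_ker n : (4 <= n)%N -> rv n y1z *m W n = 0.
Proof.
move=> hn; apply: in_ker => //.
  by move=> i hi; rewrite /Afz /y1z; splits; rewrite /bz /=; lia.
rewrite dot_gz // !U_rv //; try lia.
rewrite /y1z /bz /=.
rewrite (_ : (n.-1 == 0%N) = false); last by lia.
rewrite (_ : (n.-1 == 1%N) = false); last by lia.
by rewrite /=; lra.
Qed.

Lemma y2_ker n : (4 <= n)%N -> (4 %| n)%N -> rv n y2z *m W n = 0.
Proof.
move=> hn h4; apply: in_ker => //.
  by move=> i hi; rewrite /Afz /y2z; splits; rewrite /bz /=; lia.
rewrite dot_gz // !U_rv //; try lia.
rewrite /y2z /bz /=.
rewrite (_ : (n.-1 < 2)%N = false); last by lia.
rewrite (_ : (n.-1 %% 4 == 1)%N = false); last by lia.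
rewrite (_ : (n.-1 %% 4 == 3)%N = true); last by lia.
by rewrite /=; lra.
Qed.


Lemma y1_vals n : (4 <= n)%N ->
  [/\ U (rv n y1z) 0%N = 1, U (rv n y1z) 1%N = -1 & U (rv n y1z) 3%N = 0].
Proof.
move=> hn; rewrite !U_rv //; try lia.
Qed.

Lemma y2_vals n : (4 <= n)%N ->
  [/\ U (rv n y2z) 0%N = 1, U (rv n y2z) 1%N = 1 & U (rv n y2z) 3%N = -2].
Proof.
move=> hn; rewrite !U_rv //; try lia.
Qed.

Lemma rank_ker4 n : (4 <= n)%N -> (4 %| n)%N -> \rank (kermx (W n)) = 2%N.
Proof.
move=> hn h4.
set y1 := rv n y1z; set y2 := rv n y2z.
have [a1 a2 a3] := y1_vals hn.
have [b1 b2 b3] := y2_vals hn.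
have k1 := y1_ker hn; have k2 := y2_ker hn h4.
have sub1 : (kermx (W n) <= y1 + y2)%MS.
  apply/row_subP => i; set u := row i (kermx (W n)).
  have hu : u *m W n = 0 by apply/sub_kermxP; exact: row_sub.
  set a := (U u 0%N - U u 1%N) / 2; set b := - U u 3%N / 2.
  have E : u - a *: y1 - b *: y2 = 0.
    apply: (ker_zero hn).
    - by rewrite !mulmxBl -!scalemxAl hu k1 k2 !scaler0 !subr0.
    - by rewrite !U_lin a1 a2 b1 b2 /a /b; field.
    - by rewrite !U_lin a3 b3 /b; field.
  move/eqP: E; rewrite subr_eq0 subr_eq => /eqP ->.
  by rewrite addrC; apply: addmx_sub_adds; apply: scalemx_sub; exact: submx_refl.
apply/eqP; rewrite eqn_leq; apply/andP; split.
  apply: leq_trans (mxrankS sub1) _.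
  apply: leq_trans (mxrank_adds_leqif y1 y2).1 _.
  by have := rank_leq_row y1; have := rank_leq_row y2; lia.
have sub2 : (y1 + y2 <= kermx (W n))%MS.
  by rewrite addsmx_sub !sub_kermx k1 k2 eqxx.
apply: leq_trans (mxrankS sub2).
have lt : (y2 < y1 + y2)%MS.
  rewrite ltmxE addsmxSr /=; apply/negP => H.
  have : (y1 <= y2)%MS by apply: submx_trans (addsmxSl _ _) H.
  case/submxP => D hD.
  have h0 : (0 < n)%N by lia.
  have h3 : (3 < n)%N by lia.
  have e0 := congr1 (fun M : 'M[rat]_(1,n) => M 0 (Ordinal h0)) hD.
  have e3 := congr1 (fun M : 'M[rat]_(1,n) => M 0 (Ordinal h3)) hD.
  move: e0 e3; rewrite !mxE !big_ord1 !mxE /y1z /y2z /bz /= => e0 e3.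
  lra.
have := rank_ltmx lt.
have : (0 < \rank y2)%N.
  rewrite lt0n mxrank_eq0; apply/eqP => h.
  have h0 : (0 < n)%N by lia.
  have := congr1 (fun M : 'M[rat]_(1,n) => M 0 (Ordinal h0)) h.
  by rewrite !mxE /y2z /bz /=.
lia.
Qed.

Lemma rank_kerN4 n : (4 <= n)%N -> ~~ (4 %| n)%N -> \rank (kermx (W n)) = 1%N.
Proof.
move=> hn h4.
set y1 := rv n y1z.
have [a1 a2 a3] := y1_vals hn.
have k1 := y1_ker hn.
have sub1 : (kermx (W n) <= y1)%MS.
  apply/row_subP => i; set u := row i (kermx (W n)).
  have hu : u *m W n = 0 by apply/sub_kermxP; exact: row_sub.
  set a := (U u 0%N - U u 1%N) / 2.
  have hu' : (u - a *: y1) *m W n = 0.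
    by rewrite !mulmxBl -!scalemxAl hu k1 !scaler0 !subr0.
  have E : u - a *: y1 = 0.
    apply: (ker_zero hn hu').
    - by rewrite !U_lin a1 a2 /a; field.
    - have [_ _ _ h] := ker_alg hn hu'; exact: h.
  move/eqP: E; rewrite subr_eq0 => /eqP ->.
  by apply: scalemx_sub; exact: submx_refl.
apply/eqP; rewrite eqn_leq; apply/andP; split.
  exact: leq_trans (mxrankS sub1) (rank_leq_row y1).
have sub2 : (y1 <= kermx (W n))%MS by rewrite sub_kermx k1 eqxx.
apply: leq_trans (mxrankS sub2).
rewrite lt0n mxrank_eq0; apply/eqP => h.
have h0 : (0 < n)%N by lia.
have := congr1 (fun M : 'M[rat]_(1,n) => M 0 (Ordinal h0)) h.
by rewrite !mxE /y1z /bz /=.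
Qed.

Local Close Scope ring_scope.
Unset Implicit Arguments.

Theorem mainTheorem2 (n : nat) (hn : (4 <= n)%N) :
  \rank (walk_matrix (adjD n)) = (if (4 %| n)%N then n - 2 else n - 1)%N.
Proof.
have hk := mxrank_ker (walk_matrix (adjD n)).
have hr := rank_leq_row (walk_matrix (adjD n)).
case: ifP => h4.
  by rewrite rank_ker4 // in hk; lia.
by rewrite rank_kerN4 ?h4 // in hk; lia.
Qed.
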